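(* Fix $y_0\in Y$ and suppose an optimal solution $(\bar\psi,\bar\eta)$ of the dual problem exists. Let $(y(\cdot),u(\cdot))$ be an admissible process on $\{0,1,\dots\}$ with $y(0)=y_0$, and suppose that for all $t=0,1,\dots$: $$k(y(t),u(t))-\bar\psi(y(t))+\bar\eta(f(y(t),u(t)))-\bar\eta(y(t))=V(y_0)-\bar\psi(y_0),\qquad\bar\psi(y(t))=\bar\psi(y_0).$$ Then $u(\cdot)$ is optimal in the long-run average problem, i.e. $$\liminf_{T\to\infty}\frac1T\sum_{t=0}^{T-1}k(y(t),u(t))=\inf_{u'\in\mathcal U(y_0)}\liminf_{T\to\infty}\frac1T\sum_{t=0}^{T-1}k(y'(t),u'(t)),$$ where $y'$ denotes the trajectory generated by $u'$.
   Context: Let $Y\subset\mathbb{R}^m$ be nonempty compact, $U_0$ a compact metric space, $U(\cdot):Y\rightsquigarrow U_0$ upper semicontinuous and compact-valued, and $f:\mathbb{R}^m\times U_0\to\mathbb{R}^m$, $k:\mathbb{R}^m\times U_0\to\mathbb{R}$ continuous. Put $A(y):=\{u\in U(y): f(y,u)\in Y\}$ and $G:=\{(y,u):y\in Y,\ u\in A(y)\}$. Standing assumption: $A(y)\ne\emptyset$ for all $y\in Y$. An admissible process from $y_0$ on $\{0,\dots,T-1\}$ (respectively on $\{0,1,\dots\}$) is a pair $(y(t),u(t))$ with $y(0)=y_0$, $u(t)\in A(y(t))$ and $y(t+1)=f(y(t),u(t))$. The controls form $\mathcal U_T(y_0)$ (respectively $\mathcal U(y_0)$). Define $V_T(y_0):=\frac1T\min_{u\in\mathcal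 U_T(y_0)}\sum_{t=0}^{T-1}k(y(t),u(t))$. Standing assumption of this result: for every $y\in Y$ the limit $V(y):=\lim_{T\to\infty}V_T(y)$ exists, and $V$ is continuous on $Y$. Dual problem: $d^*(y_0):=\sup\mu$, where the supremum is over triples $(\mu,\psi,\eta)\in\mathbb{R}\times C(Y)\times C(Y)$ with, for all $(y,u)\in G$: $$k(y,u)+\psi(y_0)-\psi(y)+\eta(f(y,u))-\eta(y)-\mu\ge0,\qquad\psi(f(y,u))-\psi(y)\ge0.$$ An optimal solution of the dual problem is a pair $(\bar\psi,\bar\eta)\in C(Y)\times C(Y)$ with, for all $(y,u)\in G$: $$k(y,u)+\bar\psi(y_0)-\bar\psi(y)+\bar\eta(f(y,u))-\bar\eta(y)\ge d^*(y_0),\qquad\bar\psi(f(y,u))-\bar\psi(y)\ge0.$$ *)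

(* Defs.v *)
From HB Require Import structures.
From mathcomp Require Import all_boot all_order all_algebra.
From mathcomp Require Import all_classical all_reals all_analysis.
Set Implicit Arguments. Unset Strict Implicit. Unset Printing Implicit Defensive.
Import Order.TTheory GRing.Theory Num.Theory.
Import numFieldNormedType.Exports.
Local Open Scope classical_set_scope.
Local Open Scope ring_scope.

Section Defs.
Variables (R : realType) (m : nat) (U0 : pseudoMetricType R).
Local Notation X := 'rV[R]_m.

Definition usc_on (Y : set X) (U : X -> set U0) : Prop :=
  forall y, Y y -> forall O : set U0, open O -> U y `<=` O ->
    exists2 N : set X, nbhs y N & forall y', N y' -> Y y' -> U y' `<=` O.

Definition Aset (Y : set X) (U : X -> set U0) (f : X -> U0 -> X) (y : X) : set U0 :=
  [set u | U y u /\ Y (f y u)].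

Definition Gset (Y : set X) (U : X -> set U0) (f : X -> U0 -> X) : set (X * U0) :=
  [set p | Y p.1 /\ Aset Y U f p.1 p.2].

Fixpoint traj (f : X -> U0 -> X) (y0 : X) (u : nat -> U0) (t : nat) : X :=
  match t with
  | 0 => y0
  | t'.+1 => f (traj f y0 u t') (u t')
  end.

Definition UT (Y : set X) (U : X -> set U0) (f : X -> U0 -> X) (T : nat) (y0 : X)
  : set (nat -> U0) :=
  [set u | forall t, (t < T)%N -> Aset Y U f (traj f y0 u t) (u t)].

Definition Uinf (Y : set X) (U : X -> set U0) (f : X -> U0 -> X) (y0 : X)
  : set (nat -> U0) :=
  [set u | forall t, Aset Y U f (traj f y0 u t) (u t)].

Definition avg_cost (f : X -> U0 -> X) (k : X -> U0 -> R) (y0 : X) (u : nat -> U0)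
  (T : nat) : R :=
  (\sum_(t < T) k (traj f y0 u t) (u t)) / T%:R.

(* V_T(y0) = (1/T) min_{u in U_T(y0)} sum_{t<T} k  (min written as inf) *)
Definition VT (Y : set X) (U : X -> set U0) (f : X -> U0 -> X) (k : X -> U0 -> R)
  (T : nat) (y0 : X) : R :=
  inf [set \sum_(t < T) k (traj f y0 u t) (u t) | u in UT Y U f T y0] / T%:R.

Definition dual_feasible (Y : set X) (U : X -> set U0) (f : X -> U0 -> X)
  (k : X -> U0 -> R) (y0 : X) (mu : R) (psi eta : X -> R) : Prop :=
  {within Y, continuous psi} /\ {within Y, continuous eta} /\
  forall y u, Gset Y U f (y, u) ->
    0 <= k y u + psi y0 - psi y + eta (f y u) - eta y - mu /\
    0 <= psi (f y u) - psi y.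

Definition dstar (Y : set X) (U : X -> set U0) (f : X -> U0 -> X)
  (k : X -> U0 -> R) (y0 : X) : \bar R :=
  ereal_sup [set mu%:E | mu in
     [set mu | exists psi eta, dual_feasible Y U f k y0 mu psi eta]].

Definition dual_optimal (Y : set X) (U : X -> set U0) (f : X -> U0 -> X)
  (k : X -> U0 -> R) (y0 : X) (psi eta : X -> R) : Prop :=
  {within Y, continuous psi} /\ {within Y, continuous eta} /\
  forall y u, Gset Y U f (y, u) ->
    (dstar Y U f k y0 <= (k y u + psi y0 - psi y + eta (f y u) - eta y)%:E)%E /\
    0 <= psi (f y u) - psi y.

End Defs.

(* Main.v *)
Require Import Defs.
From HB Require Import structures.
From mathcomp Require Import all_boot all_order all_algebra.
From mathcomp Require Import all_classical all_reals all_analysis.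
From mathcomp Require Import ring lra.
Import Order.TTheory GRing.Theory Num.Theory.
Import numFieldNormedType.Exports.
Local Open Scope classical_set_scope.
Local Open Scope ring_scope.

Set Implicit Arguments.
Section Helpers.
Variables (R : realType) (m : nat) (U0 : pseudoMetricType R).
Local Notation X := 'rV[R]_m.

Lemma trajY_inf (Y : set X) (U : X -> set U0) (f : X -> U0 -> X) y0 u :
  Y y0 -> Uinf Y U f y0 u -> forall t, Y (traj f y0 u t).
Proof. by move=> Y0 Hu [|t] //=; have [] := Hu t. Qed.

Lemma trajY_T (Y : set X) (U : X -> set U0) (f : X -> U0 -> X) T y0 u :
  Y y0 -> UT Y U f T y0 u -> forall t, (t <= T)%N -> Y (traj f y0 u t).
Proof. by move=> Y0 Hu [|t] //= tT; have [] := Hu t tT. Qed.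

Lemma Uinf_UT (Y : set X) (U : X -> set U0) (f : X -> U0 -> X) T y0 u :
  Uinf Y U f y0 u -> UT Y U f T y0 u.
Proof. by move=> Hu t _; apply: Hu. Qed.

Lemma bounded_real_image (T : topologicalType) (A : set T) (g : T -> R) :
  compact A -> {within A, continuous g} ->
  exists M : R, forall x, A x -> `|g x| <= M.
Proof.
move=> cA cg.
have := compact_bounded (continuous_compact cg cA).
move=> [M0 [_ HM]].
exists (M0 + 1) => x Ax.
by apply: (HM (M0 + 1)); [rewrite ltrDl | exists x].
Qed.

Lemma limn_einf_le (a b : (\bar R)^nat) :
  (forall n, (a n <= b n)%E) -> (limn_einf a <= limn_einf b)%E.
Proof.
move=> ab; rewrite !limn_einf_lim; apply: lee_lim.
- exact: is_cvg_einfs.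
- exact: is_cvg_einfs.
apply: nearW => n /=.
apply: le_ereal_inf_tmp => _ [j /= nj <-].
apply: le_trans (ab j); apply: ereal_inf_lbound; by exists j.
Qed.

End Helpers.
Unset Implicit Arguments.

Theorem proposition4p5 (R : realType) (m : nat) (U0 : pseudoMetricType R)
  (Y : set 'rV[R]_m) (U : 'rV[R]_m -> set U0)
  (f : 'rV[R]_m -> U0 -> 'rV[R]_m) (k : 'rV[R]_m -> U0 -> R)
  (V : 'rV[R]_m -> R) (y0 : 'rV[R]_m) (psib etab : 'rV[R]_m -> R)
  (u : nat -> U0) :
  Y !=set0 -> compact Y ->
  hausdorff_space U0 -> compact [set: U0] ->
  usc_on Y U -> (forall y, Y y -> compact (U y)) ->
  continuous (fun p : 'rV[R]_m * U0 => f p.1 p.2) ->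
  continuous (fun p : 'rV[R]_m * U0 => k p.1 p.2) ->
  (forall y, Y y -> Aset Y U f y !=set0) ->
  (forall y, Y y -> VT Y U f k n y @[n --> \oo] --> V y) ->
  {within Y, continuous V} ->
  Y y0 ->
  dual_optimal Y U f k y0 psib etab ->
  u \in Uinf Y U f y0 ->
  (forall t, k (traj f y0 u t) (u t) - psib (traj f y0 u t)
               + etab (f (traj f y0 u t) (u t)) - etab (traj f y0 u t)
             = V y0 - psib y0) ->
  (forall t, psib (traj f y0 u t) = psib y0) ->
  limn_einf (fun T => (avg_cost f k y0 u T)%:E)
  = ereal_inf [set limn_einf (fun T => (avg_cost f k y0 u' T)%:E)
               | u' in Uinf Y U f y0].
Proof.
move=> _ cY _ cU0 _ _ _ ck _ VTcv _ Y0 [_ [ceta _]] uin Hk Hpsi.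
have Hu : Uinf Y U f y0 u by rewrite inE in uin.
have [M HM] : exists M : R, forall y v, Y y -> `|k y v| <= M.
  have [M HM] := bounded_real_image (compact_setX cY cU0)
    (continuous_subspaceT ck).
  by exists M => y v Yy; apply: (HM (y, v)).
have [E HE] := bounded_real_image cY ceta.
have Hsum : forall T, \sum_(t < T) k (traj f y0 u t) (u t)
   = T%:R * V y0 + etab y0 - etab (traj f y0 u T).
  elim=> [|T IH]; first by rewrite big_ord0 mul0r add0r subrr.
  rewrite big_ord_recr /= IH.
  have := Hk T; rewrite Hpsi => HkT.
  have -> : k (traj f y0 u T) (u T) = V y0 - etab (f (traj f y0 u T) (u T))
     + etab (traj f y0 u T) by lra.
  rewrite -natr1; ring.
have Hcv : avg_cost f k y0 u T @[T --> \oo] --> V y0.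
  apply/cvgrPdist_le => eps eps0.
  have E0 : 0 <= E by apply: le_trans (normr_ge0 _) (HE _ Y0).
  near=> T.
  have T0 : (0 < T)%N by near: T; exists 1%N.
  have TN : 2 * E / eps < T%:R.
    near: T; exists (Num.truncn (2 * E / eps)).+1 => // T /= HT.
    apply: lt_le_trans (truncnS_gt _) _; by rewrite ler_nat.
  rewrite /avg_cost Hsum.
  have Tpos : 0 < T%:R :> R by rewrite ltr0n.
  have -> : V y0 - (T%:R * V y0 + etab y0 - etab (traj f y0 u T)) / T%:R
     = (etab (traj f y0 u T) - etab y0) / T%:R.
    by field; rewrite gt_eqF.
  rewrite normrM normfV (gtr0_norm Tpos) ler_pdivrMr //.
  rewrite ltr_pdivrMr // in TN.
  have := ler_normB (etab (traj f y0 u T)) (etab y0).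
  have := HE _ (trajY_inf Y0 Hu T); have := HE _ Y0.
  rewrite [eps * _]mulrC; lra.
have Lu : limn_einf (fun T => (avg_cost f k y0 u T)%:E) = (V y0)%:E.
  apply: (cvg_limn_einf_sup _).1.
  apply/fine_cvgP; split; first by apply: nearW.
  exact: Hcv.
have LB : forall u', Uinf Y U f y0 u' ->
    ((V y0)%:E <= limn_einf (fun T => (avg_cost f k y0 u' T)%:E))%E.
  move=> u' Hu'.
  have <- : limn_einf (fun T => (VT Y U f k T y0)%:E) = (V y0)%:E.
    apply: (cvg_limn_einf_sup _).1.
    apply/fine_cvgP; split; first by apply: nearW.
    exact: VTcv.
  apply: limn_einf_le => T; rewrite lee_fin /VT /avg_cost.
  apply: ler_wpM2r; first by rewrite invr_ge0.
  apply: ge_inf; last by exists u'; [exact: Uinf_UT|].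
  exists (T%:R * - M) => _ [w Hw <-].
  have -> : T%:R * - M = \sum_(t < T) - M by rewrite sumr_const card_ord mulr_natl.
  apply: ler_sum => t _.
  have Yt : Y (traj f y0 w t) by apply: (trajY_T Y0 Hw); exact: ltnW.
  have := HM _ (w t) Yt; rewrite ler_norml => /andP[] //.
rewrite Lu; apply/eqP; rewrite eq_le; apply/andP; split.
- by apply: le_ereal_inf_tmp => _ [w Hw <-]; apply: LB.
- by apply: ereal_inf_lbound; exists u => //; rewrite Lu.
Unshelve. all: by end_near.
Qed.
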